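(* Let $d\ge1$, let $\zeta=\{\zeta_k\}_{k\in\mathbb{Z}^d}$ be a stationary random field with $\mathrm{E}(\zeta_0)=0$ and $\mathrm{Var}(\zeta_0)<\infty$, and let $\delta>0$. Suppose that for all $\psi_1,\psi_2\in\mathscr{U}$ with $\mathrm{sep}(\mathrm{supp}[\psi_1],\mathrm{supp}[\psi_2])\ge\delta$ the pair $(S_n(\psi_1),S_n(\psi_2))$ is asymptotically independent as $n\to\infty$. Then for every integer $N\ge2$ and all $\varphi_1,\ldots,\varphi_N\in\mathscr{U}$ with $\mathrm{sep}(\mathrm{supp}[\varphi_i],\mathrm{supp}[\varphi_j])\ge\delta$ for all $1\le i\ne j\le N$, the vector $(S_n(\varphi_1),\ldots,S_n(\varphi_N))$ is asymptotically independent as $n\to\infty$.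
   Context: $\mathscr{U}$ is the set of finite linear combinations of indicator functions of boxes $(a_1,b_1]\times\cdots\times(a_d,b_d]\subset\mathbb{R}^d$ with $a_i<b_i$ real; $\mathrm{supp}[\varphi]$ is the support of $\varphi$. For $A,B\subset\mathbb{R}^d$, $\mathrm{sep}(A,B)=\inf\{\max_{1\le i\le d}|x_i-y_i|: x\in A,y\in B\}$. For $\varphi\in\mathscr{U}$, $S_n(\varphi):=n^{-d/2}\sum_{k\in\mathbb{Z}^d}\zeta_k\varphi(k/n)$. A sequence of random vectors $(X_{1,n},\ldots,X_{N,n})$ ($N\ge2$) is asymptotically independent as $n\to\infty$ if for all real $\xi_1,\ldots,\xi_N$, $\lim_{n\to\infty}\big|\mathrm{E}[e^{i\xi_1X_{1,n}+\cdots+i\xi_NX_{N,n}}]-\prod_{j=1}^N\mathrm{E}[e^{i\xi_jX_{j,n}}]\big|=0$. *)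

(* Defs.v *)
From HB Require Import structures.
From mathcomp Require Import all_boot all_order all_algebra.
From mathcomp Require Import all_classical all_reals all_analysis.
From mathcomp Require Import complex.
Set Implicit Arguments. Unset Strict Implicit. Unset Printing Implicit Defensive.
Import Order.TTheory GRing.Theory Num.Theory.
Import numFieldNormedType.Exports.
Local Open Scope classical_set_scope.
Local Open Scope ring_scope.

Definition box {R : realType} {d : nat} (a b : 'rV[R]_d) : set 'rV[R]_d :=
  [set x | forall i : 'I_d, a ord0 i < x ord0 i <= b ord0 i].

Definition inU {R : realType} {d : nat} (phi : 'rV[R]_d -> R) : Prop :=
  exists s : seq (R * 'rV[R]_d * 'rV[R]_d),
    (forall t, t \in s -> forall i : 'I_d, t.1.2 ord0 i < t.2 ord0 i) /\
    phi = fun x => \sum_(t <- s) t.1.1 * \1_(box t.1.2 t.2) x.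

Definition supp {R : realType} {d : nat} (phi : 'rV[R]_d -> R) : set 'rV[R]_d :=
  [set x | phi x != 0].

Definition maxdist {R : realType} {d : nat} (x y : 'rV[R]_d) : R :=
  \big[Num.max/0]_(i < d) `|x ord0 i - y ord0 i|.

(** sep(A,B) = inf { max_i |x_i - y_i| : x in A, y in B } (an extended real,
    +oo when A or B is empty). *)
Definition sep {R : realType} {d : nat} (A B : set 'rV[R]_d) : \bar R :=
  ereal_inf [set (maxdist x y)%:E | x in A & y in B].

Definition prod_measurable {R : realType} (m : nat) (A : set ('I_m -> R)) : Prop :=
  <<s [set C | exists (i : 'I_m) (B : set R), measurable B /\ C = [set f | B (f i)]] >> A.

Definition stationary {R : realType} {dT : measure_display} {T : measurableType dT}
  (P : probability T R) {d : nat} (zeta : 'rV[int]_d -> {RV P >-> R}) : Prop :=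
  forall (h : 'rV[int]_d) (m : nat) (s : 'I_m -> 'rV[int]_d) (A : set ('I_m -> R)),
    prod_measurable A ->
    P [set w | A (fun j => zeta (s j + h) w)] = P [set w | A (fun j => zeta (s j) w)].

Definition Sn {R : realType} {dT : measure_display} {T : measurableType dT}
  (P : probability T R) {d : nat} (zeta : 'rV[int]_d -> {RV P >-> R})
  (n : nat) (phi : 'rV[R]_d -> R) : T -> R :=
  fun w => (Num.sqrt (n%:R : R) ^+ d)^-1 *
    \sum_(k \in [set: 'rV[int]_d])
       (zeta k w * phi (\row_(i < d) ((k ord0 i)%:~R / (n%:R : R)))).

(** E[e^{i Y}] = E[cos Y] + i E[sin Y], as a complex number. *)
Definition charE {R : realType} {dT : measure_display} {T : measurableType dT}
  (P : probability T R) (Y : T -> R) : R[i] :=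
  (fine (\int[P]_w (cos (Y w))%:E) +i* fine (\int[P]_w (sin (Y w))%:E))%C.

Definition cmod {R : realType} (z : R[i]) : R :=
  Num.sqrt (complex.Re z ^+ 2 + complex.Im z ^+ 2).

Definition asym_indep {R : realType} {dT : measure_display} {T : measurableType dT}
  (P : probability T R) (N : nat) (X : 'I_N -> nat -> T -> R) : Prop :=
  forall xi : 'I_N -> R,
    (fun n => cmod (charE P (fun w => \sum_(j < N) xi j * X j n w)
                    - \prod_(j < N) charE P (fun w => xi j * X j n w)))
      @ \oo --> (0 : R).

(* Main.v *)
Set Warnings "-all".
Require Import Defs.
From HB Require Import structures.
From mathcomp Require Import all_boot all_order all_algebra.
From mathcomp Require Import all_classical all_reals all_analysis.
From mathcomp Require Import complex.
Import Order.TTheory GRing.Theory Num.Theory.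
Import numFieldNormedType.Exports.
Local Open Scope classical_set_scope.
Local Open Scope ring_scope.
From mathcomp Require Import measurable_realfun.
From mathcomp Require Import lra ring.
From mathcomp Require Import finmap.
From mathcomp Require Import zify.
Section Lin.
Variables (R : realType) (dT : measure_display) (T : measurableType dT) (P : probability T R).
Variables (d : nat) (zeta : 'rV[int]_d -> {RV P >-> R}).

Definition pt (n : nat) (k : 'rV[int]_d) : 'rV[R]_d :=
  \row_(i < d) ((k ord0 i)%:~R / (n%:R : R)).

Definition Fin (n : nat) (f : 'rV[R]_d -> R) :=
  finite_set [set k : 'rV[int]_d | f (pt n k) != 0].

Lemma Sn_widen n f : Fin n f -> forall w,
  Sn zeta n f w = (Num.sqrt (n%:R : R) ^+ d)^-1 *
    \sum_(k <- fset_set [set k : 'rV[int]_d | f (pt n k) != 0]) (zeta k w * f (pt n k)).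
Proof.
move=> Ff w; rewrite /Sn; congr (_ * _).
rewrite -(fsbig_widen [set k : 'rV[int]_d | f (pt n k) != 0]) //.
  by rewrite fsbig_finite.
move=> k [_ /=] /negP; rewrite negbK => /eqP ->; by rewrite mulr0.
Qed.

Lemma Sn_add n f g : Fin n f -> Fin n g ->
  Sn zeta n (fun x => f x + g x) = (fun w => Sn zeta n f w + Sn zeta n g w).
Proof.
move=> Ff Fg; apply: funext => w; rewrite /Sn -mulrDr; congr (_ * _).
set K := [set k : 'rV[int]_d | f (pt n k) != 0] `|` [set k | g (pt n k) != 0].
have FK : finite_set K by rewrite /K finite_setU; split.
have nK : forall k, ~ K k -> f (pt n k) = 0 /\ g (pt n k) = 0.
  move=> k; rewrite /K /= => /not_orP [] /negP; rewrite negbK => /eqP -> /negP.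
  by rewrite negbK => /eqP ->.
rewrite -(fsbig_widen K setT); last 2 first.
- by [].
- by move=> k [_ /nK [/= -> ->]]; rewrite addr0 mulr0.
rewrite -(fsbig_widen K setT (fun k => zeta k w * f _)); last 2 first.
- by [].
- by move=> k [_ /nK [/= -> _]]; rewrite mulr0.
rewrite -(fsbig_widen K setT (fun k => zeta k w * g _)); last 2 first.
- by [].
- by move=> k [_ /nK [_ /= ->]]; rewrite mulr0.
rewrite -fsbig_split //; apply: eq_fsbigr => k _; by rewrite mulrDr.
Qed.

Lemma Sn_scale n c f :
  Sn zeta n (fun x => c * f x) = (fun w => c * Sn zeta n f w).
Proof.
apply: funext => w; rewrite /Sn mulrCA; congr (_ * _).
rewrite mulr_fsumr; apply: eq_fsbigr => k _; by rewrite mulrCA.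
Qed.

Lemma Sn_zero n : Sn zeta n (fun _ => 0) = (fun _ => 0).
Proof.
apply: funext => w; rewrite /Sn fsbig1 ?mulr0 // => k _; by rewrite mulr0.
Qed.

Lemma Fin_add n f g : Fin n f -> Fin n g -> Fin n (fun x => f x + g x).
Proof.
move=> Ff Fg; apply: (sub_finite_set (B := [set k : 'rV[int]_d | f (pt n k) != 0] `|` [set k | g (pt n k) != 0])).
  move=> k /= H; case: (boolP (f (pt n k) != 0)) => hf; first by left.
  right => /=; move: hf H; rewrite negbK => /eqP ->; by rewrite add0r.
by rewrite finite_setU.
Qed.

Lemma Fin_scale n c f : Fin n f -> Fin n (fun x => c * f x).
Proof.
move=> Ff; apply: (sub_finite_set _ Ff) => k /=; rewrite mulf_eq0 negb_or.
by case/andP.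
Qed.

Lemma Fin_zero n : Fin n (fun _ => 0).
Proof.
by apply: (sub_finite_set _ (finite_set0 _)) => k /=; rewrite eqxx.
Qed.

Lemma Fin_sum n N (c : 'I_N -> R) (F : 'I_N -> 'rV[R]_d -> R) :
  (forall j, Fin n (F j)) -> Fin n (fun x => \sum_(j < N) c j * F j x).
Proof.
elim: N c F => [|N IH] c F HF.
  have -> : (fun x : 'rV[R]_d => \sum_(j < 0) c j * F j x) = (fun _ => 0).
    by apply: funext => x; rewrite big_ord0.
  exact: Fin_zero.
have -> : (fun x => \sum_(j < N.+1) c j * F j x) =
  (fun x => c ord0 * F ord0 x + \sum_(j < N) c (lift ord0 j) * F (lift ord0 j) x).
  by apply: funext => x; rewrite big_ord_recl.
apply: Fin_add; first exact: Fin_scale.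
exact: IH.
Qed.

Lemma Sn_sum n N (c : 'I_N -> R) (F : 'I_N -> 'rV[R]_d -> R) :
  (forall j, Fin n (F j)) ->
  Sn zeta n (fun x => \sum_(j < N) c j * F j x) =
  (fun w => \sum_(j < N) c j * Sn zeta n (F j) w).
Proof.
elim: N c F => [|N IH] c F HF.
  have -> : (fun x : 'rV[R]_d => \sum_(j < 0) c j * F j x) = (fun _ => 0).
    by apply: funext => x; rewrite big_ord0.
  by rewrite Sn_zero; apply: funext => w; rewrite big_ord0.
have -> : (fun x => \sum_(j < N.+1) c j * F j x) =
  (fun x => c ord0 * F ord0 x + \sum_(j < N) c (lift ord0 j) * F (lift ord0 j) x).
  by apply: funext => x; rewrite big_ord_recl.
rewrite Sn_add; last 2 first.
- exact: Fin_scale.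
- exact: Fin_sum.
rewrite Sn_scale IH //; apply: funext => w; by rewrite big_ord_recl.
Qed.

Lemma Sn_meas n f : Fin n f -> measurable_fun setT (Sn zeta n f).
Proof.
move=> Ff; rewrite (funext (@Sn_widen n f Ff)).
apply: measurable_funM => //; apply: measurable_sum => k.
apply: measurable_funM => //.
Qed.

End Lin.
Arguments pt {R d}.
Arguments Fin {R d}.

Section U.
Variables (R : realType) (d : nat).

Lemma inU0 : inU (fun _ : 'rV[R]_d => 0).
Proof. exists [::]; split => //; apply: funext => x; by rewrite big_nil. Qed.

Lemma inU_add (f g : 'rV[R]_d -> R) : inU f -> inU g -> inU (fun x => f x + g x).
Proof.
move=> [s1 [H1 ->]] [s2 [H2 ->]]; exists (s1 ++ s2); split.
  by move=> t; rewrite mem_cat => /orP [] /[dup] ?; [apply: H1|apply: H2].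
by apply: funext => x; rewrite big_cat.
Qed.

Lemma inU_scale c (f : 'rV[R]_d -> R) : inU f -> inU (fun x => c * f x).
Proof.
move=> [s [H ->]]; exists (map (fun t => (c * t.1.1, t.1.2, t.2)) s); split.
  by move=> t /mapP [u /H Hu ->].
apply: funext => x; rewrite big_map mulr_sumr; apply: eq_bigr => t _.
by rewrite mulrA.
Qed.

Lemma inU_sum N (c : 'I_N -> R) (F : 'I_N -> 'rV[R]_d -> R) :
  (forall j, inU (F j)) -> inU (fun x => \sum_(j < N) c j * F j x).
Proof.
elim: N c F => [|N IH] c F HF.
  have -> : (fun x : 'rV[R]_d => \sum_(j < 0) c j * F j x) = (fun _ => 0).
    by apply: funext => x; rewrite big_ord0.
  exact: inU0.
have -> : (fun x => \sum_(j < N.+1) c j * F j x) =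
  (fun x => c ord0 * F ord0 x + \sum_(j < N) c (lift ord0 j) * F (lift ord0 j) x).
  by apply: funext => x; rewrite big_ord_recl.
apply: inU_add; first exact: inU_scale.
exact: IH.
Qed.

Lemma fin_bounded (M : nat) :
  finite_set [set k : 'rV[int]_d | forall i, `|k ord0 i| <= M%:Z].
Proof.
apply: (sub_finite_set _ (finite_image
   (fun m : 'rV['I_(M + M).+1]_d => \row_i ((m ord0 i : nat)%:Z - M%:Z))
   (finite_finset (X := setT)))).
move=> k /= Hk; exists (\row_i inord (absz (k ord0 i + M%:Z))) => //.
apply/rowP => i; rewrite !mxE.
move: (Hk i); set x := k ord0 i; rewrite ler_norml => /andP [h1 h2].
have h0 : (0 <= x + M%:Z)%R by lia.
rewrite inordK; first by rewrite gez0_abs // addrK.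
rewrite -ltz_nat gez0_abs //; lia.
Qed.


Lemma box_bound (n : nat) (a b : 'rV[R]_d) (k : 'rV[int]_d) : (0 < n)%N ->
  box a b (pt n k) -> forall i,
  `|k ord0 i| <= (Num.bound (n%:R * \sum_j (`|a ord0 j| + `|b ord0 j|)))%:Z.
Proof.
move=> n0 Hb i; have := Hb i; rewrite /pt mxE => /andP [h1 h2].
set y := (k ord0 i)%:~R : R.
have hn : 0 < n%:R :> R by rewrite ltr0n.
have hy : `|y| <= n%:R * (`|a ord0 i| + `|b ord0 i|).
  have ey : y = n%:R * (y / n%:R) by field; rewrite gt_eqF.
  rewrite ey normrM (ger0_norm (ltW hn)) ler_wpM2l ?(ltW hn) //.
  have := ler_norm (a ord0 i); have := ler_norm (- a ord0 i); rewrite normrN.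
  have := ler_norm (b ord0 i); have := ler_norm (- b ord0 i); rewrite normrN.
  rewrite ler_norml; move: h1 h2; set z := y / n%:R; move=> h1 h2 *.
  apply/andP; split; lra.
have hs : `|a ord0 i| + `|b ord0 i| <= \sum_j (`|a ord0 j| + `|b ord0 j|).
  rewrite (bigD1 i) //= lerDl sumr_ge0 // => j _; exact: addr_ge0.
set B := \sum_j _ in hs *.
have hB : 0 <= n%:R * B by rewrite mulr_ge0 ?(ltW hn) // sumr_ge0 // => j _; exact: addr_ge0.
have := archi_boundP hB.
have := le_trans hy (ler_wpM2l (ltW hn) hs).
set M := Num.bound _; move=> H1 H2.
have H3 : `|y| < M%:R by exact: le_lt_trans H1 H2.
have : (`|k ord0 i|)%:~R < (M%:Z)%:~R :> R.
  by rewrite intr_norm /= -/y -pmulrn.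
rewrite ltr_int; exact: ltW.
Qed.

Lemma Fin_inU n (f : 'rV[R]_d -> R) : (0 < n)%N -> inU f -> Fin n f.
Proof.
move=> n0 [s [_ ->]]; elim: s => [|t s IH].
  apply: (sub_finite_set _ (finite_set0 _)) => k /=; by rewrite big_nil eqxx.
have -> : (fun x => \sum_(t0 <- t :: s) t0.1.1 * \1_(box t0.1.2 t0.2) x) =
  (fun x => t.1.1 * \1_(box t.1.2 t.2) x + \sum_(t0 <- s) t0.1.1 * \1_(box t0.1.2 t0.2) x).
  by apply: funext => x; rewrite big_cons.
apply: Fin_add => //.
apply: (sub_finite_set _ (fin_bounded
  (Num.bound (n%:R * \sum_j (`|t.1.2 ord0 j| + `|t.2 ord0 j|))))).
move=> k /=; rewrite mulf_eq0 negb_or => /andP [_ h]; apply: box_bound => //.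
move: h; rewrite indicE; case: (boolP (pt n k \in box t.1.2 t.2)) => [/set_mem //|_].
by rewrite eqxx.
Qed.

End U.

Section S.
Variables (R : realType) (dT : measure_display) (T : measurableType dT) (P : probability T R).

Lemma fine_int_bound (f : R -> R) (Y : T -> R) : continuous f ->
  (forall x, `|f x| <= 1) -> measurable_fun setT Y ->
  `|fine (\int[P]_w (f (Y w))%:E)| <= 1.
Proof.
move=> cf b mY.
have mf : measurable_fun [set: T] (EFin \o (f \o Y)).
  apply/measurable_EFinP; apply: measurableT_comp => //.
  exact: continuous_measurable_fun.
have h1 := le_abse_integral P measurableT mf.
have h2 : (\int[P]_w (`|(f (Y w))%:E|)%E <= 1)%E.
  have := @integral_le_bound _ _ _ P setT _ 1%E measurableT mf lee01.
  move=> H; apply: le_trans (H _) _.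
    by apply: aeW => x _ /=; rewrite lee_fin.
  by rewrite mul1e; apply: probability_le1.
move: h1 h2; case: (\int[P]_w (f (Y w))%:E)%E => [r||] //=.
  by move=> h1 h2; have := le_trans h1 h2; rewrite lee_fin.
all: by rewrite normr0.
Qed.

Lemma charE_bound (Y : T -> R) : measurable_fun setT Y -> cmod (charE P Y) <= 2.
Proof.
move=> mY; rewrite /cmod /charE /=.
set a := fine _; set b := fine _.
have ha : `|a| <= 1 by apply: fine_int_bound => //; [exact: continuous_cos|exact: cos_max].
have hb : `|b| <= 1 by apply: fine_int_bound => //; [exact: continuous_sin|exact: sin_max].
have -> : (2 : R) = Num.sqrt (2 ^+ 2) by rewrite sqrtr_sqr ger0_norm.
rewrite ler_sqrt ?exprn_ge0 //.
move: ha hb; rewrite !ler_norml => /andP[? ?] /andP[? ?]; nra.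
Qed.
End S.

Section Cm.
Variable R : realType.
Lemma cmodE (z : R[i]) : cmod z = Normc.normc z. Proof. by case: z. Qed.
Lemma cmod_ge0 (z : R[i]) : 0 <= cmod z. Proof. exact: sqrtr_ge0. Qed.
Lemma cmodD (x y : R[i]) : cmod (x + y) <= cmod x + cmod y.
Proof. rewrite !cmodE; exact: le_normcD. Qed.
Lemma cmodM (x y : R[i]) : cmod (x * y) = cmod x * cmod y.
Proof. rewrite !cmodE; exact: Normc.normcM. Qed.
Lemma cmod0 : cmod (0 : R[i]) = 0.
Proof. by rewrite /cmod /= expr0n /= addr0 sqrtr0. Qed.
End Cm.
Arguments cmodE {R}. Arguments cmod_ge0 {R}. Arguments cmodD {R}. Arguments cmodM {R}. Arguments cmod0 {R}.

Section Sep.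
Variables (R : realType) (d : nat).
Lemma sep_sum (N : nat) (phi0 : 'rV[R]_d -> R) (c : 'I_N -> R)
  (F : 'I_N -> 'rV[R]_d -> R) (delta : R) :
  (forall j, (delta%:E <= sep (supp phi0) (supp (F j)))%E) ->
  (delta%:E <= sep (supp phi0) (supp (fun x => (\sum_(j < N) c j * F j x)%R)))%E.
Proof.
move=> H; apply/ereal_infP => _ [x Ax [y By <-]].
have [j Fj] : exists j, F j y != 0.
  case: (pselect (exists j, F j y != 0)) => // /forallNP nF.
  move: By; rewrite /supp /= big1 ?eqxx // => j _.
  by have := nF j; move/negP; rewrite negbK => /eqP ->; rewrite mulr0.
by have := H j; move/ereal_infP; apply; exists x => //; exists y.
Qed.
End Sep.

Lemma charE_ext (R : realType) (dT : measure_display) (T : measurableType dT)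
  (P : probability T R) (Y1 Y2 : T -> R) :
  (forall w, Y1 w = Y2 w) -> charE P Y1 = charE P Y2.
Proof. by move=> H; congr charE; apply: funext. Qed.

Lemma charE0 (R : realType) (dT : measure_display) (T : measurableType dT)
  (P : probability T R) : charE P (fun _ => 0) = 1.
Proof.
rewrite /charE cos0 sin0 integral0 /=.
rewrite integral_cst //= probability_setT mul1e /=. by [].
Qed.

Lemma key_ineq (R : realType) (a c0 e p : R[i]) : cmod c0 <= 2 ->
  cmod (a - c0 * p) <= cmod (a - c0 * e) + 2 * cmod (e - p).
Proof.
move=> hc; have -> : a - c0 * p = (a - c0 * e) + c0 * (e - p) by ring.
apply: (le_trans (cmodD _ _)); rewrite lerD2l cmodM ler_wpM2r ?cmod_ge0 //.
Qed.

Lemma main_ind (R : realType) (dT : measure_display) (T : measurableType dT)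
  (P : probability T R) (d : nat) (zeta : 'rV[int]_d -> {RV P >-> R}) (delta : R) :
  (forall psi1 psi2 : 'rV[R]_d -> R, inU psi1 -> inU psi2 ->
     (delta%:E <= sep (supp psi1) (supp psi2))%E ->
     asym_indep P (fun (j : 'I_2) n => if val j == 0%N then Sn zeta n psi1
                                       else Sn zeta n psi2)) ->
  forall (N : nat) (phi : 'I_N -> ('rV[R]_d -> R)),
    (forall j, inU (phi j)) ->
    (forall i j : 'I_N, i != j -> (delta%:E <= sep (supp (phi i)) (supp (phi j)))%E) ->
    asym_indep P (fun j n => Sn zeta n (phi j)).
Proof.
move=> Hpair N; elim: N => [|N IH] phi Hu Hs xi.
  rewrite (_ : (fun n => _) = fun _ => 0); first exact: cvg_cst.
  apply: funext => n /=.
  have -> : (fun w => \sum_(j < 0) xi j * Sn zeta n (phi j) w) = (fun _ => 0).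
    by apply: funext => w; rewrite big_ord0.
  by rewrite big_ord0 charE0 subrr cmod0.
pose phi' := fun j : 'I_N => phi (lift ord0 j).
pose xi' := fun j : 'I_N => xi (lift ord0 j).
pose psi := fun x => \sum_(j < N) xi' j * phi' j x.
have Upsi : inU psi by apply: inU_sum => j; exact: Hu.
have Spsi : (delta%:E <= sep (supp (phi ord0)) (supp psi))%E.
  by apply: sep_sum => j; apply: Hs; exact: neq_lift.
have Hp := Hpair _ _ (Hu ord0) Upsi Spsi (fun j : 'I_2 => if val j == 0%N then xi ord0 else 1).
have Hs' : forall i j : 'I_N, i != j ->
    (delta%:E <= sep (supp (phi' i)) (supp (phi' j)))%E.
  by move=> i j ij; apply: Hs; rewrite (inj_eq (@lift_inj _ ord0)).
have Hi := IH phi' (fun j => Hu _) Hs' xi'.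
have L := cvgD Hp (cvgMl_tmp (a := 2) Hi).
rewrite mulr0 addr0 in L.
apply: (squeeze_cvgr (f := fun _ => 0)); last 2 first.
- exact: cvg_cst.
- exact: L.
exists 1%N => // n /= n0.
have Fi : forall j, Fin n (phi' j) by move=> j; apply: Fin_inU => //; exact: Hu.
have ESp : forall w, Sn zeta n psi w = \sum_(j < N) xi' j * Sn zeta n (phi' j) w.
  by move=> w; rewrite /psi (@Sn_sum _ _ _ _ _ zeta n N xi' phi' Fi).
have mS0 : measurable_fun setT (fun w => xi ord0 * Sn zeta n (phi ord0) w).
  apply: measurable_funM => //; apply: Sn_meas; apply: Fin_inU => //; exact: Hu.
have Ea : charE P (fun w => \sum_(j < N.+1) xi j * Sn zeta n (phi j) w) =
   charE P (fun w => \sum_(j < 2) (if val j == 0%N then xi ord0 else 1) *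
      (if val j == 0%N then Sn zeta n (phi ord0) else Sn zeta n psi) w).
  apply: charE_ext => w; rewrite big_ord_recl [RHS]big_ord_recl big_ord1 /=.
  by rewrite ESp mul1r.
have Ec : \prod_(j < 2) charE P (fun w => (if (j : nat) == 0%N then xi ord0 else 1) *
      (if (j : nat) == 0%N then Sn zeta n (phi ord0) else Sn zeta n psi) w) =
   charE P (fun w => xi ord0 * Sn zeta n (phi ord0) w) *
   charE P (fun w => \sum_(j < N) xi' j * Sn zeta n (phi' j) w).
  rewrite big_ord_recl big_ord1 /=; congr (_ * _).
  by apply: charE_ext => w; rewrite ESp mul1r.
have Ep : \prod_(j < N.+1) charE P (fun w => xi j * Sn zeta n (phi j) w) =
   charE P (fun w => xi ord0 * Sn zeta n (phi ord0) w) *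
   \prod_(j < N) charE P (fun w => xi' j * Sn zeta n (phi' j) w).
  by rewrite big_ord_recl.
rewrite cmod_ge0 /= Ea Ep.
apply: (le_trans (@key_ineq _ _ _
  (charE P (fun w => \sum_(j < N) xi' j * Sn zeta n (phi' j) w)) _ _)).
  exact: charE_bound.
rewrite -Ec; exact: lexx.
Qed.

Theorem lemma2p6 (R : realType) (dT : measure_display) (T : measurableType dT)
  (P : probability T R) (d : nat) (zeta : 'rV[int]_d -> {RV P >-> R}) (delta : R) :
  (1 <= d)%N ->
  stationary zeta ->
  P.-integrable setT (EFin \o zeta (0%R : 'rV[int]_d)) ->
  ('E_P[zeta (0%R : 'rV[int]_d)] = 0)%E ->
  P.-integrable setT (EFin \o (fun w => zeta (0%R : 'rV[int]_d) w ^+ 2)) ->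
  0 < delta ->
  (forall psi1 psi2 : 'rV[R]_d -> R, inU psi1 -> inU psi2 ->
     (delta%:E <= sep (supp psi1) (supp psi2))%E ->
     asym_indep P (fun (j : 'I_2) n => if val j == 0%N then Sn zeta n psi1
                                       else Sn zeta n psi2)) ->
  forall (N : nat) (phi : 'I_N -> ('rV[R]_d -> R)),
    (2 <= N)%N ->
    (forall j, inU (phi j)) ->
    (forall i j : 'I_N, i != j -> (delta%:E <= sep (supp (phi i)) (supp (phi j)))%E) ->
    asym_indep P (fun j n => Sn zeta n (phi j)).
Proof.
move=> _ _ _ _ _ _ Hpair N phi _ Hu Hs.
exact: (@main_ind _ _ _ _ _ _ _ Hpair _ _ Hu Hs).
Qed.
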